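(* Let $d\ge3$, $\Omega=\{1,\ldots,d\}$, and $F\le F'\le\mathrm{Sym}(\Omega)$ with $F'$ preserving the orbits of $F$, and suppose $F'$ is not 2-transitive on $\Omega$. Then there exist a vertex $x$ of $T$ and an integer $n\in\{1,2\}$ such that the stabilizer of $x$ in $G(F,F')$ does not act transitively on the set of geodesic segments of length $n$ starting at $x$.
   Context: Let $T=\mathcal{T}_d$ be the $d$-regular tree with a fixed edge coloring $c\colon E(T)\to\Omega$ whose restriction $c_v$ to the edges $E(v)$ at each vertex $v$ is a bijection onto $\Omega$. For $g\in\mathrm{Aut}(T)$, $\sigma(g,v)=c_{gv}\circ g_v\circ c_v^{-1}$ with $g_v\colon E(v)\to E(gv)$ induced by $g$. $U(F')=\{g:\sigma(g,v)\in F'\ \forall v\}$, $G(F)=\{g:\sigma(g,v)\in F$ for all but finitely many $v\}$, $G(F,F')=G(F)\cap U(F')$. *)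

(* Defs.v *)
From mathcomp Require Import all_boot all_fingroup all_solvable.
Set Implicit Arguments. Unset Strict Implicit. Unset Printing Implicit Defensive.

(* Model of the d-regular tree T_d with its canonical legal edge colouring:
   vertices are reduced words over Omega = 'I_d (no two consecutive equal
   letters), stored with the most recent letter at the head; the neighbour of
   w across the edge of colour a is [step w a] (append a, or cancel a if w
   already ends with a).  The edge {w, step w a} has colour a. *)

Definition reduced d (s : seq 'I_d) : bool := sorted (fun a b => a != b) s.

Definition vertex (d : nat) := {s : seq 'I_d | reduced s}.

Definition step_seq d (s : seq 'I_d) (a : 'I_d) : seq 'I_d :=
  match s with
  | b :: t => if b == a then t else a :: s
  | [::] => [:: a]
  end.

Lemma step_reduced d (s : seq 'I_d) a : reduced s -> reduced (step_seq s a).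
Proof.
case: s => [|b t] //= H.
case: eqP => [_|/eqP nba].
  by case: t H => //= c t /andP [].
by rewrite /reduced /= eq_sym nba.
Qed.

Definition step d (v : vertex d) (a : 'I_d) : vertex d :=
  exist _ (step_seq (sval v) a) (step_reduced a (proj2_sig v)).

Definition adj d (v w : vertex d) : bool := [exists a, w == step v a].

Definition is_aut d (g : vertex d -> vertex d) : Prop :=
  bijective g /\ forall v w, adj (g v) (g w) = adj v w.

(* local action sigma(g,v) = c_{gv} o g_v o c_v^{-1} : Omega -> Omega *)
Definition sigma d (g : vertex d -> vertex d) (v : vertex d) (a : 'I_d) : 'I_d :=
  odflt a [pick b | g (step v a) == step (g v) b].

Definition fun_in d (H : {set {perm 'I_d}}) (f : 'I_d -> 'I_d) : bool :=
  [exists p in H, [forall a, p a == f a]].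

Definition in_U d (F' : {set {perm 'I_d}}) (g : vertex d -> vertex d) : Prop :=
  is_aut g /\ forall v, fun_in F' (sigma g v).

Definition in_G d (F : {set {perm 'I_d}}) (g : vertex d -> vertex d) : Prop :=
  is_aut g /\ exists s : seq (vertex d), forall v, ~~ fun_in F (sigma g v) -> v \in s.

Definition in_GFF d (F F' : {set {perm 'I_d}}) (g : vertex d -> vertex d) : Prop :=
  in_G F g /\ in_U F' g.

(* geodesic segments of length n starting at x: sequences of vertices
   x = v_0, v_1, ..., v_n with consecutive ones adjacent and all distinct
   (in a tree, simple paths are exactly the geodesics) *)
Definition geod_segment d (x : vertex d) (n : nat) (p : seq (vertex d)) : Prop :=
  size p = n.+1 /\ head x p = x /\ path (@adj d) x (behead p) /\ uniq p.

Definition stab_transitive_segments d (F F' : {set {perm 'I_d}}) (x : vertex d) (n : nat) : Prop :=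
  forall p q, geod_segment x n p -> geod_segment x n q ->
    exists g, in_GFF F F' g /\ g x = x /\ map g p = q.

(* Main.v *)
Require Import Defs.
From mathcomp Require Import all_boot all_fingroup all_solvable.

Set Implicit Arguments. Unset Strict Implicit. Unset Printing Implicit Defensive.

Section Aux.
Variable d : nat.

Definition root : vertex d := exist _ [::] isT.

Lemma step_inv (v : vertex d) a : step (step v a) a = v.
Proof.
apply: val_inj; case: v => [[|b t] Hs] //=; first by rewrite eqxx.
case: (eqVneq b a) => [eba|nba] /=.
  subst b; case: t Hs => [|c t] //=.
  rewrite /reduced /= => /andP [nbc _].
  by rewrite eq_sym (negbTE nbc).
by rewrite eqxx.
Qed.

Lemma nSn (n : nat) : n = n.+1 -> False.
Proof. by elim: n => // n IH [] /IH. Qed.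

Lemma nSSn (n : nat) : n = n.+2 -> False.
Proof. by elim: n => // n IH [] /IH. Qed.

Lemma step_neq (v : vertex d) a : step v a != v.
Proof.
apply/eqP => /(congr1 (fun w => size (sval w))) /=.
case: v => [[|b t] _] //=; case: eqP => _ /= E.
  exact: nSn E.
by case: E => /esym/nSn.
Qed.

Lemma step_inj_col (v : vertex d) a b : step v a = step v b -> a = b.
Proof.
move=> /(congr1 sval) /=; case: v => [[|c t] _] /=; first by case.
case: (eqVneq c a) => [<-|nca]; case: (eqVneq c b) => [<-|ncb] //.
- by move=> /(congr1 size) /= /nSSn.
- by move=> /(congr1 size) /= /esym /nSSn.
- by case.
Qed.

Lemma adj_step (v : vertex d) a : adj v (step v a).
Proof. by apply/existsP; exists a. Qed.

Lemma sigmaE (g : vertex d -> vertex d) v a c :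
  g (step v a) = step (g v) c -> sigma g v a = c.
Proof.
move=> H; rewrite /sigma; case: pickP => [b /eqP Hb | Hn] /=.
  by apply: (step_inj_col (v := g v)); rewrite -Hb.
by move: (Hn c); rewrite H eqxx.
Qed.

Lemma key (F F' : {set {perm 'I_d}}) :
  stab_transitive_segments F F' root 2 ->
  forall a b a' b' : 'I_d, a != b -> a' != b' ->
  exists2 p, p \in F' & p a = a' /\ p b = b'.
Proof.
move=> Hst a b a' b' nab nab'.
have seg : forall a b : 'I_d, a != b ->
    geod_segment root 2 [:: root; step root a; step (step root a) b].
  move=> u w nuw; split=> //; split=> //; split.
    by rewrite /= !adj_step.
  rewrite /= !inE !negb_or andbT eq_sym step_neq /= [step root u == _]eq_sym step_neq andbT.
  apply/eqP => E; move/eqP: nuw; apply.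
  by apply: (step_inj_col (v := step root u)); rewrite step_inv -E.
have [g [[_ [_ HU]] [gx E]]] := Hst _ _ (seg _ _ nab) (seg _ _ nab').
case: E => _ gy gz.
have /existsP [p /andP [pF /forallP pE]] := HU (step root a).
exists p => //; split.
  rewrite (eqP (pE a)); apply: sigmaE.
  by rewrite step_inv gx gy step_inv.
rewrite (eqP (pE b)); apply: sigmaE.
by rewrite gz gy.
Qed.

End Aux.

Theorem mainTheorem10 (d : nat) (F F' : {group {perm 'I_d}}) :
  3 <= d ->
  F \subset F' ->
  (forall h, h \in F' -> forall w : 'I_d, exists2 f, f \in F & f w = h w) ->
  ~~ [transitive^2 F', on [set: 'I_d] | 'P] ->
  exists (x : vertex d) (n : nat), (n == 1 \/ n == 2) /\
    ~ stab_transitive_segments F F' x n.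
Proof.
move=> d3 _ _ ntr; exists (root d), 2; split; first by right.
move=> Hst; move/negP: ntr; apply.
have d0 : 0 < d by apply: leq_trans d3.
have d1 : 1 < d by apply: leq_trans d3.
pose a0 := Ordinal d0; pose b0 := Ordinal d1.
pose t0 := [tuple a0; b0].
have t0D : t0 \in 2.-dtuple([set: 'I_d]).
  rewrite inE; apply/andP; split => //; exact: subsetT.
apply/imsetP; exists t0 => //; apply/setP => u; apply/idP/idP.
  case/tupleP: u => u0 u; case/tupleP: u => u1 u; rewrite (tuple0 u) => uD.
  have nu : u0 != u1 by move: uD; rewrite inE /= inE andbT => /andP [].
  have [p pF [E1 E2]] := key Hst (isT : a0 != b0) nu.
  apply/imsetP; exists p => //; apply: val_inj => /=.
  by rewrite !apermE E1 E2.
case/imsetP => p _ ->; apply: n_act_dtuple => //.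
by apply/astabsP => x; rewrite !inE.
Qed.
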